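(* Fix any ordering $e_1,\dots,e_n$ of $V$. Let $D\subseteq V$ be a dense set and let $\mathcal O$ be a set with $|\mathcal O|\le k$ and $f(\mathcal O)=\mathrm{OPT}$. Suppose that (1) $|D_L|\le0.95\,\eta k$, (2) $f(D_L)\ge0.85\,f(D)$, (3) $|\mathcal O_R|\le0.15\,k$, and (4) $f(\mathcal O_R\mid D)\ge0.05\,f(\mathcal O\mid D)$. Then the output $S$ of Algorithm 1 on this stream satisfies $f(S)\ge0.50025\cdot\mathrm{OPT}$.
   Context: $V$ is a finite ground set with $|V|=n$; $f:2^V\to\mathbb{R}_{\ge0}$ is monotone, submodular and normalized ($f(\emptyset)=0$); $f(X\mid Y)=f(X\cup Y)-f(Y)$, $f(e\mid Y)=f(\{e\}\mid Y)$. $k\le n$ is a positive integer and $\mathrm{OPT}=\max\{f(S):S\subseteq V,|S|\le k\}$. A set $D$ is dense if $|D|\le\eta k$ and $f(D)\ge\frac{1-\gamma}{2}\mathrm{OPT}$, where $\gamma=10^{-2}$, $\eta=5\cdot10^{-5}$. For $T\subseteq V$, $T_L$ is the set of elements of $T$ at positions $i\le0.9n$ and $T_R=T\setminus T_L$. Algorithm 1 (knows $\mathrm{OPT}$): start with $S=\emptyset$; for $i=1,\dots,n$, add $e_i$ to $S$ if $|S|<k$ and either ($i\le 0.9n$ and $f(e_i\mid S)\ge\frac{100}{k}\mathrm{OPT}$) or ($i>0.9n$ and $f(e_i\mid S)\ge\frac{1}{10k}\mathrm{OPT}$); return $S$. *)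

(* Defs.v *)
From HB Require Import structures.
From mathcomp Require Import all_boot all_order all_algebra.
Set Implicit Arguments. Unset Strict Implicit. Unset Printing Implicit Defensive.
Import Order.TTheory GRing.Theory Num.Theory.
Local Open Scope ring_scope.

Section Defs.
Variables (R : realFieldType) (T : finType).

Definition marg (f : {set T} -> R) (X Y : {set T}) : R := f (X :|: Y) - f Y.

Definition monotone (f : {set T} -> R) : Prop :=
  forall A B : {set T}, A \subset B -> f A <= f B.
Definition submodular (f : {set T} -> R) : Prop :=
  forall A B : {set T}, f (A :|: B) + f (A :&: B) <= f A + f B.
Definition normalized (f : {set T} -> R) : Prop := f set0 = 0.
Definition nonneg (f : {set T} -> R) : Prop := forall A, 0 <= f A.

(* OPT = max { f S : |S| <= k } (the empty set is feasible, f >= 0) *)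
Definition OPT (f : {set T} -> R) (k : nat) : R :=
  \big[Num.max/0]_(S : {set T} | (#|S| <= k)%N) f S.

Definition gamma_c : R := 1 / 100%:R.
Definition eta_c : R := 5%:R / 100000%:R.

Definition dense (f : {set T} -> R) (k : nat) (D : {set T}) : Prop :=
  (#|D|%:R <= eta_c * k%:R) /\ ((1 - gamma_c) / 2%:R * OPT f k <= f D).

(* stream e_1..e_n given by e : 'I_n -> T; element e i sits at position i+1 *)
Definition in_left (n : nat) (i : 'I_n) : bool := (10 * i.+1 <= 9 * n)%N.

Definition leftpart (n : nat) (e : 'I_n -> T) (X : {set T}) : {set T} :=
  X :&: [set e i | i : 'I_n & in_left i].
Definition rightpart (n : nat) (e : 'I_n -> T) (X : {set T}) : {set T} :=
  X :\: leftpart e X.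

Definition alg1_step (f : {set T} -> R) (k n : nat) (e : 'I_n -> T) (opt : R)
    (S : {set T}) (i : 'I_n) : {set T} :=
  if (#|S| < k)%N &&
     (if in_left i then 100%:R / k%:R * opt <= marg f [set e i] S
      else 1 / (10 * k)%:R * opt <= marg f [set e i] S)
  then e i |: S else S.

Definition alg1 (f : {set T} -> R) (k n : nat) (e : 'I_n -> T) (opt : R) : {set T} :=
  foldl (alg1_step f k e opt) set0 (enum 'I_n).

End Defs.

(* Main.v *)
Require Import Defs.
From HB Require Import structures.
From mathcomp Require Import all_boot all_order all_algebra.
From mathcomp Require Import ring lra zify.
Import Order.TTheory GRing.Theory Num.Theory.
Local Open Scope ring_scope.

Section Helpers.
Variables (R : realFieldType) (T : finType) (f : {set T} -> R).
Hypotheses (fmono : monotone f) (fsub : submodular f).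

Lemma dimret (X A B : {set T}) : A \subset B -> marg f X B <= marg f X A.
Proof.
rewrite /marg => AB.
have := fsub (X :|: A) B.
have -> : X :|: A :|: B = X :|: B by rewrite -setUA (setUidPr AB).
have : f A <= f ((X :|: A) :&: B) by apply: fmono; rewrite subsetI subsetUr AB.
lra.
Qed.

Lemma marg_sub (X1 X2 S : {set T}) : marg f (X1 :|: X2) S <= marg f X1 S + marg f X2 S.
Proof.
have := dimret X1 _ _ (subsetUr X2 S).
rewrite /marg -!setUA. lra.
Qed.

Lemma union_bound (X S : {set T}) (c : R) : (forall x, x \in X -> marg f [set x] S <= c) ->
  marg f X S <= #|X|%:R * c.
Proof.
move: {2}#|X| (erefl #|X|) => m; elim: m X => [|m IH] X hX hc.
  move/eqP: hX; rewrite cards_eq0 => /eqP ->.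
  by rewrite /marg set0U subrr cards0 mul0r.
have : (0 < #|X|)%N by rewrite hX.
rewrite card_gt0 => /set0Pn [x xX].
have Xe : X = x |: (X :\ x) by rewrite setD1K.
have c1 : #|X :\ x| = m by move: hX; rewrite (cardsD1 x X) xX /= add1n => -[].
have h1 := IH _ c1 (fun y hy => hc y (subsetP (subsetDl X [set x]) y hy)).
have h2 := hc x xX.
have h3 := dimret [set x] _ _ (subsetUr (X :\ x) S).
move: h1 h2 h3; rewrite [in marg f X S]Xe /marg -!setUA hX c1 -(addn1 m) natrD.
lra.
Qed.
End Helpers.
Section Fold.
Variables (R : realFieldType) (T : finType) (f : {set T} -> R) (k n : nat) (e : 'I_n -> T) (opt : R).
Hypotheses (fmono : monotone f) (fsub : submodular f).

Definition thr (i : 'I_n) : R :=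
  if in_left i then 100%:R / k%:R * opt else 1 / (10 * k)%:R * opt.

Local Notation step := (alg1_step f k e opt).

Lemma step_eq (S : {set T}) (i : 'I_n) : step S i = if (#|S| < k)%N && (thr i <= marg f [set e i] S) then e i |: S else S.
Proof. by rewrite /alg1_step /thr; case: (in_left i). Qed.

Lemma fold_sub (l : seq 'I_n) (A : {set T}) : A \subset foldl step A l.
Proof.
elim: l A => [|i l IH] A /=; first exact: subxx.
apply: subset_trans (IH _); rewrite step_eq; case: ifP => _ //; exact: subsetUr.
Qed.

Lemma fold_card (l : seq 'I_n) (A : {set T}) : (#|A| <= k)%N -> (#|foldl step A l| <= k)%N.
Proof.
elim: l A => [|i l IH] A //= hA; apply: IH; rewrite step_eq.
case: ifP => // /andP[h _]; rewrite cardsU1; case: (e i \notin A) => /=; lia.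
Qed.

Lemma fold_gain (l : seq 'I_n) (A : {set T}) (c : R) : 0 <= c -> (forall i, i \in l -> c <= thr i) ->
  c * #|foldl step A l|%:R - c * #|A|%:R <= f (foldl step A l) - f A.
Proof.
move=> c0; elim: l A => [|i l IH] A /= hc; first lra.
have := IH (step A i) (fun j hj => hc j (mem_behead (s:=i :: l) hj)).
have hi := hc i (mem_head i l).
rewrite step_eq; case: ifP => [/andP[_ h]|_]; last lra.
have : (#|e i |: A|%:R <= #|A|%:R + 1 :> R).
  have h1 : (#|e i |: A| <= #|A| + 1)%N.
    by rewrite cardsU1; case: (e i \notin A) => /=; lia.
  by move: h1; rewrite -(ler_nat R) natrD.
move: h; rewrite /marg => h hcard.
set B := foldl _ _ _. 
have : c * #|e i |: A|%:R <= c * #|A|%:R + c by nra.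
lra.
Qed.

Lemma fold_reject (l : seq 'I_n) (A : {set T}) (i : 'I_n) : i \in l -> e i \in foldl step A l \/
  exists C : {set T}, [/\ A \subset C, C \subset foldl step A l &
     (~~ (#|C| < k)%N \/ marg f [set e i] C < thr i)].
Proof.
elim: l A => [|j l IH] A //=; rewrite in_cons => /orP[/eqP ->|hl]; last first.
  case: (IH (step A j) hl) => [h|[C [h1 h2 h3]]]; first by left.
  right; exists C; split => //; apply: subset_trans h1; rewrite step_eq.
  case: ifP => _ //; exact: subsetUr.
have hs := fold_sub l (step A j).
move: hs; rewrite step_eq; case: ifP => [_ hs|hc hs].
  by left; apply: (subsetP hs); rewrite setU11.
right; exists A; split => //.
move/negbT: hc; rewrite negb_and -ltNge => /orP[h|h]; by [left|right].
Qed.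
End Fold.

Lemma mulbound (R : realFieldType) (x c k t o : R) : 0 <= t -> x <= c * k -> t * k = o -> x * t <= c * o.
Proof. move=> t0 h <-; have := ler_wpM2r t0 h; by rewrite -!mulrA [k * t]mulrC. Qed.

Lemma left_of_lt n (i : 'I_n) : (i < (9*n) %/ 10)%N -> in_left i.
Proof. rewrite /in_left => h; lia. Qed.
Lemma right_of_ge n (i : 'I_n) : ((9*n) %/ 10 <= i)%N -> ~~ in_left i.
Proof. rewrite /in_left => h; lia. Qed.
Lemma natcontra a k : (0 < k)%N -> (100 * a <= k)%N -> (k <= a)%N -> False.
Proof. lia. Qed.

Theorem mainTheorem7 (R : realFieldType) (T : finType) (n : nat)
  (e : 'I_n -> T) (f : {set T} -> R) (k : nat) (D O : {set T}) :
  bijective e ->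
  nonneg f -> monotone f -> submodular f -> normalized f ->
  (0 < k)%N -> (k <= n)%N ->
  dense f k D ->
  (#|O| <= k)%N -> f O = OPT f k ->
  #|leftpart e D|%:R <= 95%:R / 100%:R * eta_c R * k%:R ->
  85%:R / 100%:R * f D <= f (leftpart e D) ->
  (#|rightpart e O|%:R : R) <= 15%:R / 100%:R * k%:R ->
  5%:R / 100%:R * marg f O D <= marg f (rightpart e O) D ->
  50025%:R / 100000%:R * OPT f k <= f (alg1 f k e (OPT f k)).
Proof.
move=> [g ge eg] f0 fmono fsub fnorm k0 kn [dD1 dD2] Ok fO hDL1 hDL2 hOR hmarg.
move: dD1 dD2 hDL1; rewrite /eta_c /gamma_c => dD1 dD2 hDL1.
set opt := OPT f k in fO dD2 *.
have optge : forall X : {set T}, (#|X| <= k)%N -> f X <= opt.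
  move=> X hX; exact: (le_bigmax_cond _ (P := fun S : {set T} => (#|S| <= k)%N) f hX).
have opt0 : 0 <= opt by rewrite -fnorm; apply: optge; rewrite cards0.
set S := alg1 f k e opt.
have fS0 := f0 S.
case: (lerP opt 0) => hopt; first lra.
set t := opt / k%:R.
have kR : 0 < k%:R :> R by rewrite ltr0n.
have kt : t * k%:R = opt by rewrite /t mulfVK // lt0r_neq0.
have t0 : 0 < t by rewrite /t divr_gt0.
have thrL : forall i, in_left i -> thr R k n opt i = 100%:R * t.
  by move=> i hi; rewrite /thr hi /t mulrA mulrAC.
have thrR : forall i, ~~ in_left i -> thr R k n opt i = t / 10%:R.
  move=> i hi; rewrite /thr (negbTE hi) /t natrM.
  by field; rewrite ?pnatr_eq0 -?lt0n ?k0.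
have thr0 : forall i, 0 <= thr R k n opt i.
  by move=> i; case: (boolP (in_left i)) => hi; [rewrite (thrL _ hi)|rewrite (thrR _ hi)]; lra.
have xL : forall x, x \in leftpart e D -> in_left (g x).
  move=> x; rewrite /leftpart inE => /andP[_ /imsetP[i]]; rewrite inE => hi ->.
  by rewrite ge.
have xR : forall X x, x \in rightpart e X -> ~~ in_left (g x).
  move=> X x; rewrite /rightpart inE => /andP[hn hx]; apply/negP => hl.
  move/negP: hn; apply; rewrite /leftpart inE hx /=.
  by apply/imsetP; exists (g x); rewrite ?inE ?eg.
have marg_in : forall x (A : {set T}), x \in A -> marg f [set x] A = 0.
  by move=> x A hx; rewrite /marg (setUidPr _) ?subrr // sub1set.
have hDLc := f0 (leftpart e D).
have hmO : opt - f D <= marg f O D.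
  rewrite /marg -fO; have := fmono O (O :|: D) (subsetUl _ _); lra.
case: (ltnP #|S| k) => hSk.
-
  have rej : forall i, marg f [set e i] S <= thr R k n opt i.
    move=> i; have := fold_reject _ _ f k _ e opt _ set0 _ (mem_enum 'I_n i).
    rewrite -/(alg1 f k e opt) -/S => -[h|[C [_ hC [h|h]]]].
    + by rewrite marg_in.
    + by move: h; rewrite (leq_ltn_trans (subset_leq_card hC) hSk).
    + have := dimret _ _ _ fmono fsub [set e i] _ _ hC; lra.
  have hDLb : marg f (leftpart e D) S <= #|leftpart e D|%:R * (100%:R * t).
    apply: (union_bound _ _ _ fmono fsub) => // x /xL hx; rewrite -(eg x) -(thrL _ hx); exact: rej.
  set Y := rightpart e D :|: rightpart e O.
  have hYb : marg f Y S <= #|Y|%:R * (t / 10%:R).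
    apply: (union_bound _ _ _ fmono fsub) => // x; rewrite inE => /orP[] /xR hx;
      rewrite -(eg x) -(thrR _ hx); exact: rej.
  have hYc : (#|Y| <= #|D| + #|rightpart e O|)%N.
    rewrite /Y cardsU; apply: leq_trans (leq_subr _ _) _; rewrite leq_add2r.
    exact: subset_leq_card (subsetDl _ _).
  have hincl : D :|: rightpart e O \subset (leftpart e D :|: Y) :|: S.
    apply/subsetP => x; rewrite /Y /rightpart !inE.
    by move: (x \in D) (x \in O) (x \in [set e i | i : 'I_n & in_left i]) (x \in S) => [] [] [] [].
  have h1 := fmono _ _ hincl.
  have h2 := marg_sub _ _ _ fmono fsub (leftpart e D) Y S.
  have h3 : (#|Y|%:R : R) <= #|D|%:R + #|rightpart e O|%:R.
    by rewrite -natrD ler_nat.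
  have P1 : #|leftpart e D|%:R * t <= 95%:R / 100%:R * (5%:R / 100000%:R) * opt.
    exact: mulbound (ltW t0) hDL1 kt.
  have P2 : #|Y|%:R * t <= (5%:R / 100000%:R + 15%:R / 100%:R) * opt.
    apply: mulbound (ltW t0) _ kt; lra.
  move: hmarg hmO h1 h2 hDLb hYb; rewrite /marg (setUC D); lra.
-
  set m := ((9 * n) %/ 10)%N.
  set l1 := take m (enum 'I_n); set l2 := drop m (enum 'I_n).
  set SL := foldl (alg1_step f k e opt) set0 l1.
  have hS : S = foldl (alg1_step f k e opt) SL l2.
    by rewrite /S /alg1 /SL -foldl_cat cat_take_drop.
  have hl1 : forall i, i \in l1 -> in_left i.
    move=> i hi; have := map_f val hi.
    rewrite map_take val_enum_ord take_iota mem_iota add0n leq_min => /andP[_ /andP[h _]].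
    exact: left_of_lt h.
  have hl2 : forall i, i \in l2 -> ~~ in_left i.
    move=> i hi; have := map_f val hi.
    rewrite map_drop val_enum_ord drop_iota mem_iota => /andP[h _].
    exact: right_of_ge h.
  have g1 := fold_gain _ _ f k _ e opt l1 set0 (100%:R * t) ltac:(lra)
     (fun i hi => ltac:(rewrite (thrL _ (hl1 _ hi)); lra)).
  rewrite -/SL cards0 fnorm in g1.
  have fSL : f SL <= opt by apply: optge; apply: (fold_card _ _ f k _ e opt); rewrite cards0.
  have hSL : (100 * #|SL| <= k)%N.
    rewrite -(ler_nat R) natrM -(ler_pM2r t0) [k%:R * t]mulrC kt; lra.
  have rejL : forall i, in_left i -> marg f [set e i] SL <= 100%:R * t.
    move=> i hi; have : i \in l1.
      have := mem_enum 'I_n i; rewrite -(cat_take_drop m (enum 'I_n)) mem_cat.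
      case/orP => // /hl2; by rewrite hi.
    move=> /(fold_reject _ _ f k _ e opt _ set0 _) [h|[C [_ hC [h|h]]]].
    + by rewrite marg_in //; lra.
    + have := subset_leq_card hC; move: h; rewrite -/SL -leqNgt => h1 h2.
      case: (natcontra _ _ k0 hSL (leq_trans h1 h2)).
    + have := dimret _ _ _ fmono fsub [set e i] _ _ hC; rewrite -(thrL _ hi); lra.
  have hDLb : marg f (leftpart e D) SL <= #|leftpart e D|%:R * (100%:R * t).
    apply: (union_bound _ _ _ fmono fsub) => // x /xL hx; rewrite -(eg x); exact: rejL.
  have P1 : #|leftpart e D|%:R * t <= 95%:R / 100%:R * (5%:R / 100000%:R) * opt.
    exact: mulbound (ltW t0) hDL1 kt.
  have g2 := fold_gain _ _ f k _ e opt l2 SL (t / 10%:R) ltac:(lra)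
     (fun i hi => ltac:(rewrite (thrR _ (hl2 _ hi)); lra)).
  rewrite -hS in g2.
  have hSR : (k%:R : R) <= #|S|%:R by rewrite ler_nat.
  have P3 : opt <= #|S|%:R * t.
    by have := ler_wpM2r (ltW t0) hSR; rewrite mulrC kt.
  have h4 := fmono _ _ (subsetUl (leftpart e D) SL).
  move: hDLb; rewrite /marg => hDLb.
  lra.
Qed.
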